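(* Let $X$ be a $d$-uniform simplicial complex, $k\le d$, and $f:X(k)\to[0,1]$ satisfy, for all $t>0$, $\Pr_{X(k)}[f-\mathbb{E}[f]>t]\le up(t)$ and $\Pr_{X(k)}[f-\mathbb{E}[f]<-t]\le low(t)$ for some functions $up,low:\mathbb{R}_+\to[0,1]$. Then the $d$-lift $U_{k,d}f:X(d)\to\mathbb{R}$ satisfies, for all $t>0$, \[\Pr_{X(d)}[U_{k,d}f-\mathbb{E}[f]>t]\le up(\tfrac t2)\left(1-\pi_{low}^{d,k,f}(\tfrac t2)\right)^{-1},\qquad \Pr_{X(d)}[U_{k,d}f-\mathbb{E}[f]<-t]\le low(\tfrac t2)\left(1-\pi_{up}^{d,k,f}(\tfrac t2)\right)^{-1}.\]
   Context: $X$ is a $d$-uniform simplicial complex (downward-closed set family with maximal sets of size $d$, $X(j)$ its faces of size $j$) with a distribution $\pi_d$ on $X(d)$, inducing $\pi_j$ on $X(j)$ by uniform subsampling; probabilities over $X(j)$ are with respect to $\pi_j$. The lift is $U_{k,d}f(s)=\mathbb{E}_{r\subseteq s}[f(r)]$ over uniformly random $k$-subsets $r$ of $s\in X(d)$. Define $\pi_{up}^{d,k,f}(t)=\max_{s\in X(d)}\Pr_{r\subseteq s}[f(r)-\mathbb{E}_{r\subseteq s}[f]>t]$ and $\pi_{low}^{d,k,f}(t)=\max_{s\in X(d)}\Pr_{r\subseteq s}[f(r)-\mathbb{E}_{r\subseteq s}[f]<-t]$, with $r$ a uniformly random $k$-subset of $s$. *)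

(* Defs.v *)
From mathcomp Require Import all_boot all_order all_algebra.
Set Implicit Arguments. Unset Strict Implicit. Unset Printing Implicit Defensive.
Import Order.TTheory GRing.Theory Num.Theory.
Local Open Scope ring_scope.

Section SC.
Variables (V : finType) (R : realFieldType).

Definition d_uniform_complex (X : {set {set V}}) (d : nat) : Prop :=
  (forall s r : {set V}, s \in X -> r \subset s -> r \in X) /\
  (forall s, s \in X -> (#|s| <= d)%N /\ exists2 s', s' \in X & (s \subset s') && (#|s'| == d)).

Definition faces (X : {set {set V}}) (j : nat) : {set {set V}} :=
  [set s in X | #|s| == j].

Definition is_distr (X : {set {set V}}) (d : nat) (pid : {set V} -> R) : Prop :=
  (forall s, 0 <= pid s) /\ (forall s, s \notin faces X d -> pid s = 0) /\
  \sum_(s in faces X d) pid s = 1.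

(* induced distribution on X(j): draw s ~ pi_d, then a uniform j-subset of s *)
Definition pi_ind (X : {set {set V}}) (d : nat) (pid : {set V} -> R) (j : nat)
  (r : {set V}) : R :=
  \sum_(s in faces X d | r \subset s) pid s / ('C(d, j))%:R.

Definition PrX (X : {set {set V}}) (d : nat) (pid : {set V} -> R) (j : nat)
  (P : pred {set V}) : R :=
  \sum_(r in faces X j | P r) pi_ind X d pid j r.

Definition EX (X : {set {set V}}) (d : nat) (pid : {set V} -> R) (k : nat)
  (f : {set V} -> R) : R :=
  \sum_(r in faces X k) pi_ind X d pid k r * f r.

Definition ksubsets (s : {set V}) (k : nat) : {set {set V}} :=
  [set r : {set V} | (r \subset s) && (#|r| == k)].

Definition ulift (k : nat) (f : {set V} -> R) (s : {set V}) : R :=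
  (\sum_(r in ksubsets s k) f r) / (#|ksubsets s k|)%:R.

Definition Pr_sub (s : {set V}) (k : nat) (P : pred {set V}) : R :=
  (#|[set r in ksubsets s k | P r]|)%:R / (#|ksubsets s k|)%:R.

Definition pi_up (X : {set {set V}}) (d k : nat) (f : {set V} -> R) (t : R) : R :=
  \big[Num.max/0]_(s in faces X d)
     Pr_sub s k (fun r => f r - ulift k f s > t).

Definition pi_low (X : {set {set V}}) (d k : nat) (f : {set V} -> R) (t : R) : R :=
  \big[Num.max/0]_(s in faces X d)
     Pr_sub s k (fun r => f r - ulift k f s < - t).

End SC.

(* Main.v *)
Require Import Defs.
From mathcomp Require Import all_boot all_order all_algebra.
From mathcomp Require Import ring lra.
Import Order.TTheory GRing.Theory Num.Theory.
Local Open Scope ring_scope.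

Section Helpers.
Context {V : finType} {R : realFieldType}.
Implicit Types (X : {set {set V}}) (pid : {set V} -> R).

Lemma le_bigmax0 (I : finType) (A : {set I}) (F : I -> R) i :
  i \in A -> F i <= \big[Num.max/0]_(j in A) F j.
Proof.
move=> Hi.
have : i \in index_enum I by rewrite mem_index_enum.
elim: (index_enum I) => [//|j r IH]; rewrite inE big_cons => /orP [/eqP<-|/IH H].
  by rewrite Hi le_max lexx.
by case: (j \in A); rewrite ?le_max H ?orbT.
Qed.

Lemma card_ks X d k s : s \in faces X d -> #|ksubsets s k| = 'C(d, k).
Proof.
by rewrite inE => /andP[_ /eqP <-]; rewrite /ksubsets cards_draws.
Qed.

Lemma PrX_k X d pid k P : d_uniform_complex X d ->
  PrX X d pid k P = \sum_(s in faces X d) pid s * Pr_sub R s k P.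
Proof.
move=> [dc _]; rewrite /PrX /pi_ind.
transitivity (\sum_(r in faces X k | P r) \sum_(s in faces X d)
   (if r \subset s then pid s / ('C(d, k))%:R else 0)).
  by apply: eq_bigr => r _; rewrite big_mkcondr.
rewrite exchange_big /=; apply: eq_bigr => s sX.
rewrite -big_mkcondr /=.
rewrite (eq_bigl (mem [set r in ksubsets s k | P r])); last first.
  move=> r /=; rewrite !inE.
  case rs: (r \subset s); rewrite ?andbF ?andbT //=.
  have -> : r \in X by apply: (dc s); [move: sX; rewrite inE => /andP[]|].
  by rewrite /= andbC.
rewrite sumr_const /Pr_sub (card_ks _ _ k _ sX).
by rewrite -[_ *+ _]mulr_natr mulrAC -mulrA.
Qed.

Lemma PrX_d X d pid P :
  PrX X d pid d P = \sum_(s in faces X d | P s) pid s.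
Proof.
rewrite /PrX; apply: eq_bigr => r /andP[rX _]; rewrite /pi_ind binn.
rewrite (eq_bigl (pred1 r)) ?big_pred1_eq ?divr1 //.
move=> s /=; case sr: (s == r).
  by move/eqP: sr => ->; rewrite rX subxx.
apply/negbTE/andP => -[sX rs]; move: sr; rewrite eq_sym eqEcard rs /=.
move: sX rX; rewrite !inE => /andP[_ /eqP ->] /andP[_ /eqP ->].
by rewrite leqnn.
Qed.

Lemma Pr_sub_ge0 (s : {set V}) k (P : pred {set V}) : 0 <= Pr_sub R s k P .
Proof. by rewrite /Pr_sub divr_ge0 ?ler0n. Qed.

Lemma Pr_sub_mono (s : {set V}) k (P Q : pred {set V}) :
  (forall r, r \in ksubsets s k -> P r -> Q r) ->
  Pr_sub R s k P <= Pr_sub R s k Q .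
Proof.
move=> HPQ; rewrite /Pr_sub ler_wpM2r ?invr_ge0 ?ler0n // ler_nat.
apply: subset_leq_card; apply/subsetP => r; rewrite !inE => /andP[rK Pr].
have rK' : r \in ksubsets s k by rewrite inE.
by rewrite rK (HPQ r rK' Pr).
Qed.

Lemma Pr_sub_compl (s : {set V}) k (P : pred {set V}) : (0 < #|ksubsets s k|)%N ->
  Pr_sub R s k P + Pr_sub R s k (predC P) = 1 .
Proof.
move=> Kp; rewrite /Pr_sub -mulrDl -natrD.
have -> : (#|[set r in ksubsets s k | P r]| + #|[set r in ksubsets s k | predC P r]|
   = #|ksubsets s k|)%N.
  rewrite -(cardsID [set r | P r] (ksubsets s k)); congr (_ + _)%N;
    apply: eq_card => r; rewrite !inE /= andbC //.
by rewrite divff // pnatr_eq0 -lt0n.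
Qed.

Lemma gen X d k pid (G : pred {set V}) (Bad : {set V} -> pred {set V})
  (Q : pred {set V}) (a c : R) :
  d_uniform_complex X d -> is_distr X d pid -> (k <= d)%N ->
  (forall s, s \in faces X d -> G s -> forall r, r \in ksubsets s k ->
      ~~ Bad s r -> Q r) ->
  (forall s, s \in faces X d -> Pr_sub R s k (Bad s) <= a) -> a < 1 ->
  PrX X d pid k Q <= c -> PrX X d pid d G <= c / (1 - a).
Proof.
move=> Hc [pge0 _] kd HQ Hbad a1 Hc'.
rewrite ler_pdivlMr ?subr_gt0 //; apply: le_trans Hc'.
rewrite PrX_d PrX_k // mulr_suml.
apply: le_trans (_ : _ <= \sum_(s in faces X d | G s) pid s * Pr_sub R s k Q) _.
  apply: ler_sum => s /andP[sX Gs]; apply: ler_wpM2l => //.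
  have Kp : (0 < #|ksubsets s k|)%N by rewrite (card_ks _ _ k _ sX) bin_gt0.
  have := Pr_sub_compl s k (Bad s) Kp; have := Hbad s sX.
  have : Pr_sub R s k (predC (Bad s)) <= Pr_sub R s k Q.
    by apply: Pr_sub_mono => r rK; apply: HQ.
  lra.
rewrite [X in _ <= X](bigID G) /= lerDl; apply: sumr_ge0 => s _.
by rewrite mulr_ge0 ?Pr_sub_ge0.
Qed.

End Helpers.

Theorem mainTheorem10 (V : finType) (R : realFieldType)
  (X : {set {set V}}) (d k : nat) (pid : {set V} -> R)
  (f : {set V} -> R) (up low : R -> R) :
  d_uniform_complex X d ->
  is_distr X d pid ->
  (k <= d)%N ->
  (forall r, r \in faces X k -> 0 <= f r <= 1) ->
  (forall t, 0 < t -> 0 <= up t <= 1) ->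
  (forall t, 0 < t -> 0 <= low t <= 1) ->
  (forall t, 0 < t ->
     PrX X d pid k (fun r => f r - EX X d pid k f > t) <= up t) ->
  (forall t, 0 < t ->
     PrX X d pid k (fun r => f r - EX X d pid k f < - t) <= low t) ->
  forall t, 0 < t ->
    (pi_low X d k f (t / 2) < 1 ->
       PrX X d pid d (fun s => ulift k f s - EX X d pid k f > t)
         <= up (t / 2) / (1 - pi_low X d k f (t / 2))) /\
    (pi_up X d k f (t / 2) < 1 ->
       PrX X d pid d (fun s => ulift k f s - EX X d pid k f < - t)
         <= low (t / 2) / (1 - pi_up X d k f (t / 2))).
Proof.
move=> Hc Hd kd _ _ _ Hup Hlow t t0.
have t2 : 0 < t / 2 by rewrite divr_gt0.
split=> Ha.
  apply: (@gen V R X d k pid _ (fun s r => f r - ulift k f s < - (t / 2)) (fun r => f r - EX X d pid k f > t / 2)) => //.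
  - move=> s _ /= Gs r _; rewrite -leNgt => H; lra.
  - by move=> s sX; exact: (le_bigmax0 _ _ (fun s => Pr_sub R s k (fun r => f r - ulift k f s < - (t / 2))) _ sX).
  - exact: Hup.
apply: (@gen V R X d k pid _ (fun s r => f r - ulift k f s > t / 2) (fun r => f r - EX X d pid k f < - (t / 2))) => //.
- move=> s _ /= Gs r _; rewrite -leNgt => H; lra.
- by move=> s sX; exact: (le_bigmax0 _ _ (fun s => Pr_sub R s k (fun r => f r - ulift k f s > t / 2)) _ sX).
- exact: Hlow.
Qed.
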